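(* Let $M$ be a locally-finite map in $\mathbb{E}^2$ with exactly one end such that $V(M)$ is a locally finite collection of vertices, and suppose $G\le\mathrm{Isom}(\mathbb{E}^2)$ acts quasi-transitively on $M$. Then $G$ is a wallpaper group.
   Context: A map $M$ in a surface $X$ is a (simple, connected, infinite) graph embedded in $X$: vertices are distinct points, edges are curves meeting only at common endpoints, and each face is homeomorphic to an open disc. Locally-finite and number of ends refer to the underlying graph. $V(M)$ is a locally finite collection of vertices if every compact subset contains only finitely many vertices of $M$. $G$ acts on $M$ if each $g\in G$ maps $V(M)$ to itself inducing a graph automorphism (and maps the embedded map to itself); quasi-transitively means finitely many orbits on $V(M)$. A wallpaper group is a discrete group of isometries of $\mathbb{E}^2$ containing two linearly independent translations. *)

(* Defs.v *)
From HB Require Import structures.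
From mathcomp Require Import all_boot all_order all_algebra.
From mathcomp Require Import all_classical all_reals all_analysis.
From mathcomp Require Import Rstruct Rstruct_topology.
From Stdlib Require Import Relations.
Set Implicit Arguments. Unset Strict Implicit. Unset Printing Implicit Defensive.
Import Order.TTheory GRing.Theory Num.Theory.
Local Open Scope classical_set_scope.
Local Open Scope ring_scope.

Definition plane : Type := (Rdefinitions.R * Rdefinitions.R)%type.

Definition edist (x y : plane) : Rdefinitions.R :=
  Num.sqrt ((x.1 - y.1) ^+ 2 + (x.2 - y.2) ^+ 2).

Definition origin : plane := (0, 0).

Definition is_isometry (f : plane -> plane) : Prop :=
  forall x y, edist (f x) (f y) = edist x y.

Definition isom_subgroup (G : set (plane -> plane)) : Prop :=
  [/\ (forall g, G g -> is_isometry g),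
      G id,
      (forall g h, G g -> G h -> G (g \o h)) &
      (forall g, G g -> exists2 h, G h & (h \o g = id /\ g \o h = id))].

(* Discreteness of G in Isom(E^2) with the compact-open topology
   (= topology of uniform convergence on compacta; closed balls about the
   origin form a cofinal family of compacta). *)
Definition discrete_isom_group (G : set (plane -> plane)) : Prop :=
  forall g, G g -> exists r eps : Rdefinitions.R, 0 < eps /\
    forall h, G h -> (forall x, edist x origin <= r -> edist (h x) (g x) < eps) ->
      h = g.

Definition translation (t : plane) : plane -> plane :=
  fun x => (x.1 + t.1, x.2 + t.2).

Definition lin_indep2 (u v : plane) : Prop :=
  forall a b : Rdefinitions.R,
    (a * u.1 + b * v.1, a * u.2 + b * v.2) = origin -> a = 0 /\ b = 0.

Definition wallpaper_group (G : set (plane -> plane)) : Prop :=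
  [/\ isom_subgroup G, discrete_isom_group G &
      exists u v, [/\ lin_indep2 u v, G (translation u) & G (translation v)]].

Definition arc_between (e : set plane) (u v : plane) : Prop :=
  exists gam : Rdefinitions.R -> plane,
    [/\ {within `[0, 1]%classic, continuous gam},
        {in `[0, 1]%classic &, injective gam},
        e = gam @` `[0, 1]%classic, gam 0 = u & gam 1 = v].

Record embedded_graph := EmbGraph {
  vert : set plane;
  edge : set (set plane)
}.

Definition adj (M : embedded_graph) (u v : plane) : Prop :=
  vert M u /\ vert M v /\ exists2 e, edge M e & arc_between e u v.

Definition drawing (M : embedded_graph) : set plane :=
  vert M `|` \bigcup_(e in edge M) e.

Definition open_disc : set plane := [set x | edist x origin < 1].

Definition homeomorphic (A B : set plane) : Prop :=
  exists (f g : plane -> plane),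
    [/\ (forall x, A x -> B (f x)), (forall y, B y -> A (g y)),
        (forall x, A x -> g (f x) = x), (forall y, B y -> f (g y) = y) &
        ({within A, continuous f} /\ {within B, continuous g})].

Definition is_face (M : embedded_graph) (F : set plane) : Prop :=
  exists2 x, (~ drawing M x) & F = connected_component (~` drawing M) x.

(* M is a map in E^2 (simple, connected, infinite graph, 2-cell embedded) *)
Definition is_map (M : embedded_graph) : Prop :=
  [/\
      (forall e, edge M e -> exists u v,
         [/\ vert M u, vert M v, u <> v & arc_between e u v]),
      (forall e u v w, edge M e -> arc_between e u v -> vert M w -> e w ->
         w = u \/ w = v),
      (forall e e' u v u' v', edge M e -> edge M e' -> e <> e' ->
         arc_between e u v -> arc_between e' u' v' ->
         forall x, e x -> e' x -> (x = u \/ x = v) /\ (x = u' \/ x = v')) &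
      (forall e e' u v, edge M e -> edge M e' ->
         arc_between e u v -> arc_between e' u v -> e = e')] /\
  [/\
      (forall u v, vert M u -> vert M v -> clos_refl_trans _ (adj M) u v),
      ~ finite_set (vert M) &
      (forall F, is_face M F -> homeomorphic F open_disc)].

Definition locally_finite_graph (M : embedded_graph) : Prop :=
  forall v, vert M v -> finite_set [set u | adj M v u].

Definition adj_minus (M : embedded_graph) (S : set plane) (u v : plane) : Prop :=
  adj M u v /\ ~ S u /\ ~ S v.

Definition is_ray (M : embedded_graph) (r : nat -> plane) : Prop :=
  injective r /\ forall i, adj M (r i) (r i.+1).

Definition equiv_rays (M : embedded_graph) (r s : nat -> plane) : Prop :=
  forall S : set plane, finite_set S -> S `<=` vert M ->
    exists i j, [/\ (forall k, (i <= k)%N -> ~ S (r k)),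
                    (forall k, (j <= k)%N -> ~ S (s k)) &
                    clos_refl_trans _ (adj_minus M S) (r i) (s j)].

Definition one_ended (M : embedded_graph) : Prop :=
  (exists r, is_ray M r) /\
  (forall r s, is_ray M r -> is_ray M s -> equiv_rays M r s).

Definition locally_finite_vertices (M : embedded_graph) : Prop :=
  forall K : set plane, compact K -> finite_set (K `&` vert M).

Definition acts_on (G : set (plane -> plane)) (M : embedded_graph) : Prop :=
  forall g, G g -> g @` vert M = vert M /\
                   [set g @` e | e in edge M] = edge M.

Definition quasi_transitive (G : set (plane -> plane)) (M : embedded_graph) : Prop :=
  acts_on G M /\
  finite_set [set O : set plane | exists2 v, vert M v & O = [set g v | g in G]].

(* Main.v *)
Require Import Defs.
From HB Require Import structures.
From mathcomp Require Import all_boot all_order all_algebra.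
From mathcomp Require Import all_classical all_reals all_analysis.
From mathcomp Require Import Rstruct Rstruct_topology.
From mathcomp Require Import ring lra.
From Stdlib Require Import Relations.
Set Implicit Arguments. Unset Strict Implicit. Unset Printing Implicit Defensive.
Import Order.TTheory GRing.Theory Num.Theory.
Local Open Scope classical_set_scope.
Local Open Scope ring_scope.
Notation R := Rdefinitions.R.
Definition d2 (p q : plane) : R := (p.1 - q.1) ^+ 2 + (p.2 - q.2) ^+ 2.
Definition dot (p q : plane) : R := p.1 * q.1 + p.2 * q.2.
Definition padd (p q : plane) : plane := (p.1 + q.1, p.2 + q.2).

Lemma d2_ge0 p q : 0 <= d2 p q.
Proof. by rewrite /d2 addr_ge0 // sqr_ge0. Qed.

Lemma edistE p q : Defs.edist p q = Num.sqrt (d2 p q).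
Proof. by []. Qed.

Lemma iso_d2 g : is_isometry g -> forall x y, d2 (g x) (g y) = d2 x y.
Proof.
move=> hg x y; have := hg x y; rewrite !edistE => h.
by rewrite -(sqr_sqrtr (d2_ge0 (g x) (g y))) h sqr_sqrtr // d2_ge0.
Qed.

Section Coef.
Variable g : plane -> plane.
Definition ca := (g (1,0)).1 - (g origin).1.
Definition cc := (g (1,0)).2 - (g origin).2.
Definition cb := (g (0,1)).1 - (g origin).1.
Definition cd := (g (0,1)).2 - (g origin).2.
Definition lin (w : plane) : plane := (ca * w.1 + cb * w.2, cc * w.1 + cd * w.2).
Definition det := ca * cd - cb * cc.
End Coef.

Lemma iso_orth g : is_isometry g ->
  [/\ ca g ^+ 2 + cc g ^+ 2 = 1, cb g ^+ 2 + cd g ^+ 2 = 1 & ca g * cb g + cc g * cd g = 0].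
Proof.
move=> hg.
have h1 := iso_d2 hg (1,0) origin.
have h2 := iso_d2 hg (0,1) origin.
have h3 := iso_d2 hg (1,0) (0,1).
move: h1 h2 h3; rewrite /d2 /ca /cb /cc /cd /origin /=.
set a1 := (g (1,0)).1; set a2 := (g (1,0)).2; set b1 := (g (0,1)).1; set b2 := (g (0,1)).2.
set e1 := (g (0,0)).1; set e2 := (g (0,0)).2.
move=> h1 h2 h3; split; nra.
Qed.

Lemma orth_rows (a b c d : R) : a ^+ 2 + c ^+ 2 = 1 -> b ^+ 2 + d ^+ 2 = 1 -> a * b + c * d = 0 ->
  [/\ a ^+ 2 + b ^+ 2 = 1, c ^+ 2 + d ^+ 2 = 1 & a * c + b * d = 0].
Proof.
move=> h1 h2 h3.
have e1 : c ^+ 2 - b ^+ 2 = b ^+ 2 * (a ^+ 2 + c ^+ 2 - 1) - c ^+ 2 * (b ^+ 2 + d ^+ 2 - 1)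
   - (a * b - c * d) * (a * b + c * d) by ring.
have e2 : a * c + b * d = (a * b + c * d) * (a * d + b * c) + a * c * (1 - (b ^+ 2 + d ^+ 2))
   + b * d * (1 - (a ^+ 2 + c ^+ 2)) by ring.
rewrite h1 h2 h3 !subrr !mul0r !mulr0 subr0 !addr0 in e1 e2.
split => //; lra.
Qed.

Lemma iso_rep g : is_isometry g -> forall p, g p = padd (lin g p) (g origin).
Proof.
move=> hg p.
have [w1 w2 w3] := iso_orth hg.
have [r1 r2 r3] := orth_rows w1 w2 w3.
have h1 := iso_d2 hg p origin.
have h2 := iso_d2 hg p (1,0).
have h3 := iso_d2 hg p (0,1).
have h4 := iso_d2 hg (1,0) origin.
have h5 := iso_d2 hg (0,1) origin.
move: h1 h2 h3 h4 h5 w1 w2 w3 r1 r2 r3; rewrite /d2 /lin /padd /ca /cb /cc /cd /origin /=.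
set a1 := (g (1,0)).1; set a2 := (g (1,0)).2; set b1 := (g (0,1)).1; set b2 := (g (0,1)).2.
set e1 := (g (0,0)).1; set e2 := (g (0,0)).2.
case E: (g p) => [q1 q2] /=.
case: p E => p1 p2 E /=.
move=> h1 h2 h3 h4 h5 w1 w2 w3 r1 r2 r3.
have d1 : (q1 - e1) * (a1 - e1) + (q2 - e2) * (a2 - e2) = p1 by nra.
have d2' : (q1 - e1) * (b1 - e1) + (q2 - e2) * (b2 - e2) = p2 by nra.
set a := a1 - e1 in d1 w1 w3 r1 r3 *; set c := a2 - e2 in d1 w1 w3 r2 r3 *.
set b := b1 - e1 in d2' w2 w3 r1 r3 *; set d := b2 - e2 in d2' w2 w3 r2 r3 *.
set x1 := q1 - e1 in d1 d2'; set x2 := q2 - e2 in d1 d2'.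
have k1 : x1 = a * p1 + b * p2.
  rewrite -d1 -d2'.
  have -> : a * (x1 * a + x2 * c) + b * (x1 * b + x2 * d) = x1 * (a ^+ 2 + b ^+ 2) + x2 * (a * c + b * d) by ring.
  by rewrite r1 r3; ring.
have k2 : x2 = c * p1 + d * p2.
  rewrite -d1 -d2'.
  have -> : c * (x1 * a + x2 * c) + d * (x1 * b + x2 * d) = x2 * (c ^+ 2 + d ^+ 2) + x1 * (a * c + b * d) by ring.
  by rewrite r2 r3; ring.
congr pair.
  by rewrite -k1 /x1; ring.
by rewrite -k2 /x2; ring.
Qed.
Lemma seq_ubound (T : eqType) (s : seq T) (Q : T -> R -> Prop) :
  (forall x, x \in s -> exists B, forall B', B <= B' -> Q x B') ->
  exists B, forall B', B <= B' -> forall x, x \in s -> Q x B'.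
Proof.
elim: s => [|y s IH] h; first by exists 0 => B' _ x.
have [B1 hB1] := h y (mem_head _ _).
have hs : forall x, x \in s -> x \in y :: s by move=> x hx; rewrite inE hx orbT.
have [B2 hB2] := IH (fun x hx => h x (hs x hx)).
exists (Num.max B1 B2) => B' hB' x; rewrite inE => /orP[/eqP ->|hx].
  by apply: hB1; apply: le_trans hB'; rewrite le_max lexx.
by apply: hB2 => //; apply: le_trans hB'; rewrite le_max lexx orbT.
Qed.

Lemma fin_ubound (T : eqType) (F : set T) (Q : T -> R -> Prop) :
  finite_set F ->
  (forall x, F x -> exists B, forall B', B <= B' -> Q x B') ->
  exists B, forall x, F x -> Q x B.
Proof.
move=> /finite_seqP[s ->] h.
have [B hB] := seq_ubound (fun x hx => h x hx).
by exists B => x hx; apply: hB.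
Qed.

Lemma seq_lbound (T : eqType) (s : seq T) (Q : T -> R -> Prop) :
  (forall x, x \in s -> exists e, 0 < e /\ forall e', 0 < e' -> e' <= e -> Q x e') ->
  exists e, 0 < e /\ forall e', 0 < e' -> e' <= e -> forall x, x \in s -> Q x e'.
Proof.
elim: s => [|y s IH] h; first by exists 1; split => // e' _ _ x.
have [e1 [he1 hQ1]] := h y (mem_head _ _).
have hs : forall x, x \in s -> x \in y :: s by move=> x hx; rewrite inE hx orbT.
have [e2 [he2 hQ2]] := IH (fun x hx => h x (hs x hx)).
exists (Num.min e1 e2); split; first by rewrite lt_min he1 he2.
move=> e' he' hle x; rewrite inE => /orP[/eqP ->|hx].
  by apply: hQ1 => //; apply: le_trans hle _; rewrite ge_min lexx.
by apply: hQ2 => //; apply: le_trans hle _; rewrite ge_min lexx orbT.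
Qed.

Lemma fin_lbound (T : eqType) (F : set T) (Q : T -> R -> Prop) :
  finite_set F ->
  (forall x, F x -> exists e, 0 < e /\ forall e', 0 < e' -> e' <= e -> Q x e') ->
  exists e, 0 < e /\ forall x, F x -> Q x e.
Proof.
move=> /finite_seqP[s ->] h.
have [e [he hQ]] := seq_lbound (fun x hx => h x hx).
by exists e; split => // x hx; apply: hQ.
Qed.

Lemma nat_lbound (n : nat) (f : nat -> R) : exists B, forall i, (i <= n)%N -> B <= f i.
Proof.
elim: n => [|n [B hB]]; first by exists (f 0%N) => i; rewrite leqn0 => /eqP ->.
exists (Num.min B (f n.+1)) => i; rewrite leq_eqVlt => /orP[/eqP ->|hi].
  by rewrite ge_min lexx orbT.
by apply: le_trans (hB i hi); rewrite ge_min lexx.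
Qed.

Lemma box_finite (M : embedded_graph) (C : R) : locally_finite_vertices M ->
  finite_set [set p | vert M p /\ `|p.1| <= C /\ `|p.2| <= C].
Proof.
move=> hlf.
have hK : compact (`[-C, C]%classic `*` `[-C, C]%classic : set plane).
  by apply: compact_setX; apply: segment_compact.
apply: sub_finite_set (hlf _ hK).
move=> [x y] /= [hv [hx hy]]; split => //; split => /=;
  by rewrite /= in_itv /= -ler_norml.
Qed.
Lemma lin_padd g p q : lin g (padd p q) = padd (lin g p) (lin g q).
Proof. rewrite /lin /padd /=; congr pair; ring. Qed.

Lemma iso_shift g : is_isometry g -> forall p w, g (padd p w) = padd (g p) (lin g w).
Proof.
move=> hg p w; rewrite (iso_rep hg (padd p w)) (iso_rep hg p) lin_padd /padd /=; congr pair; ring.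
Qed.

Lemma iso_coefs g : is_isometry g ->
  [/\ ca g ^+ 2 + cc g ^+ 2 = 1, cb g ^+ 2 + cd g ^+ 2 = 1, ca g * cb g + cc g * cd g = 0,
      ca g ^+ 2 + cb g ^+ 2 = 1 & (cc g ^+ 2 + cd g ^+ 2 = 1 /\ ca g * cc g + cb g * cd g = 0)].
Proof.
move=> hg; have [h1 h2 h3] := iso_orth hg; have [h4 h5 h6] := orth_rows h1 h2 h3; by split.
Qed.

Lemma lin_dot g : is_isometry g -> forall p q, dot (lin g p) (lin g q) = dot p q.
Proof.
move=> hg [p1 p2] [q1 q2]; have [h1 h2 h3 _ _] := iso_coefs hg.
rewrite /dot /lin /=.
have -> : (ca g * p1 + cb g * p2) * (ca g * q1 + cb g * q2) + (cc g * p1 + cd g * p2) * (cc g * q1 + cd g * q2)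
  = p1 * q1 * (ca g ^+ 2 + cc g ^+ 2) + p2 * q2 * (cb g ^+ 2 + cd g ^+ 2) + (p1 * q2 + p2 * q1) * (ca g * cb g + cc g * cd g) by ring.
by rewrite h1 h2 h3; ring.
Qed.

Lemma coefs_affine f a b c d (e : plane) :
  (forall x, f x = (a * x.1 + b * x.2 + e.1, c * x.1 + d * x.2 + e.2)) ->
  [/\ ca f = a, cb f = b, cc f = c & cd f = d].
Proof.
move=> hf; rewrite /ca /cb /cc /cd !hf /origin /=; split; ring.
Qed.

Lemma lin_affine f a b c d (e : plane) :
  (forall x, f x = (a * x.1 + b * x.2 + e.1, c * x.1 + d * x.2 + e.2)) ->
  forall w, lin f w = (a * w.1 + b * w.2, c * w.1 + d * w.2).
Proof. by move=> /coefs_affine[h1 h2 h3 h4] w; rewrite /lin h1 h2 h3 h4. Qed.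

Lemma iso_comp g h : is_isometry g -> is_isometry h -> is_isometry (g \o h).
Proof. by move=> hg hh x y /=; rewrite hg hh. Qed.

Lemma comp_affine g h : is_isometry g -> is_isometry h -> forall x,
  (g \o h) x = (
     (ca g * ca h + cb g * cc h) * x.1 + (ca g * cb h + cb g * cd h) * x.2 + (g (h origin)).1,
     (cc g * ca h + cd g * cc h) * x.1 + (cc g * cb h + cd g * cd h) * x.2 + (g (h origin)).2).
Proof.
move=> hg hh x /=.
rewrite (iso_rep hh x) (iso_shift hg) (iso_rep hg (lin h x)) (iso_rep hg (h origin)) /padd /lin /=.
congr pair; ring.
Qed.

Lemma lin_comp g h : is_isometry g -> is_isometry h ->
  forall w, lin (g \o h) w = lin g (lin h w).
Proof.
move=> hg hh w; rewrite (lin_affine (comp_affine hg hh)) /lin /=; congr pair; ring.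
Qed.

Lemma det_comp g h : is_isometry g -> is_isometry h -> det (g \o h) = det g * det h.
Proof.
move=> hg hh; have [h1 h2 h3 h4] := coefs_affine (comp_affine hg hh).
rewrite /det h1 h2 h3 h4; ring.
Qed.

Lemma iso_translation t : is_isometry (translation t).
Proof.
move=> x y; rewrite /Defs.edist /translation /=; congr Num.sqrt; congr (_ ^+ 2 + _ ^+ 2); ring.
Qed.

Lemma translation_affine t x :
  translation t x = (1 * x.1 + 0 * x.2 + t.1, 0 * x.1 + 1 * x.2 + t.2).
Proof. rewrite /translation; congr pair; ring. Qed.

Lemma lin_translation t w : lin (translation t) w = w.
Proof.
rewrite (lin_affine (translation_affine t)); case: w => w1 w2 /=; congr pair; ring.
Qed.

Lemma det_translation t : det (translation t) = 1.
Proof.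
have [h1 h2 h3 h4] := coefs_affine (translation_affine t); rewrite /det h1 h2 h3 h4; ring.
Qed.

Lemma lin_id_translation g : is_isometry g -> (forall w, lin g w = w) ->
  g = translation (g origin).
Proof.
move=> hg hl; apply: funext => x; rewrite (iso_rep hg) hl /padd /translation //.
Qed.

Lemma det_sq g : is_isometry g -> det g ^+ 2 = 1.
Proof.
move=> hg; have [h1 h2 h3 _ _] := iso_coefs hg.
have -> : det g ^+ 2 = (ca g ^+ 2 + cc g ^+ 2) * (cb g ^+ 2 + cd g ^+ 2) - (ca g * cb g + cc g * cd g) ^+ 2
  by rewrite /det; ring.
by rewrite h1 h2 h3; ring.
Qed.

Lemma det_form g : is_isometry g -> cb g = - cc g * det g /\ cd g = ca g * det g.
Proof.
move=> hg; have [h1 h2 h3 _ _] := iso_coefs hg.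
have e1 : cb g = - cc g * det g + ca g * (ca g * cb g + cc g * cd g) - cb g * (ca g ^+ 2 + cc g ^+ 2 - 1)
  by rewrite /det; ring.
have e2 : cd g = ca g * det g + cc g * (ca g * cb g + cc g * cd g) - cd g * (ca g ^+ 2 + cc g ^+ 2 - 1)
  by rewrite /det; ring.
rewrite h1 h3 subrr !mulr0 !subr0 !addr0 in e1 e2; by split.
Qed.

Lemma det_pm1 g : is_isometry g -> det g = 1 \/ det g = -1.
Proof.
move=> hg; have h := det_sq hg.
have : (det g - 1) * (det g + 1) = 0.
  have -> : (det g - 1) * (det g + 1) = det g ^+ 2 - 1 by ring.
  by rewrite h subrr.
by move/eqP; rewrite mulf_eq0 => /orP[/eqP h1|/eqP h1]; [left|right]; lra.
Qed.

Lemma rot_commute g h : is_isometry g -> is_isometry h -> det g = 1 -> det h = 1 ->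
  forall w, lin g (lin h w) = lin h (lin g w).
Proof.
move=> hg hh dg dh w; have [bg dg'] := det_form hg; have [bh dh'] := det_form hh.
rewrite dg in bg dg'; rewrite dh in bh dh'.
rewrite /lin /= bg dg' bh dh'; congr pair; ring.
Qed.

Lemma refl_invol g : is_isometry g -> det g = -1 -> forall w, lin g (lin g w) = w.
Proof.
move=> hg dg w; have [bg dg'] := det_form hg; have [h1 _ _ _ _] := iso_coefs hg.
rewrite dg in bg dg'.
rewrite /lin /= bg dg'; case: w => w1 w2 /=; congr pair.
  have -> : ca g * (ca g * w1 + - cc g * -1 * w2) + - cc g * -1 * (cc g * w1 + ca g * -1 * w2)
     = (ca g ^+ 2 + cc g ^+ 2) * w1 by ring.
  by rewrite h1 mul1r.
have -> : cc g * (ca g * w1 + - cc g * -1 * w2) + ca g * -1 * (cc g * w1 + ca g * -1 * w2)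
   = (ca g ^+ 2 + cc g ^+ 2) * w2 by ring.
by rewrite h1 mul1r.
Qed.
Section ContK.
Import numFieldNormedType.Exports.
Lemma lin_cvgK (K : realType) (a b e : K) (x : K * K) :
  (fun p : K * K => a * p.1 + b * p.2 + e) @ (nbhs x) --> (a * x.1 + b * x.2 + e).
Proof.
have h1 : (fun p : K * K => p.1) @ (nbhs x) --> x.1 by exact: cvg_fst.
have h2 : (fun p : K * K => p.2) @ (nbhs x) --> x.2 by exact: cvg_snd.
have h3 : (fun p : K * K => a * p.1) @ (nbhs x) --> a * x.1.
  by apply: cvgM => //; exact: cvg_cst.
have h4 : (fun p : K * K => b * p.2) @ (nbhs x) --> b * x.2.
  by apply: cvgM => //; exact: cvg_cst.
have h5 : (fun p : K * K => a * p.1 + b * p.2) @ (nbhs x) --> a * x.1 + b * x.2.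
  exact: (cvgD h3 h4).
have h6 : (fun _ : K * K => e) @ (nbhs x) --> e by exact: cvg_cst.
exact: (cvgD h5 h6).
Qed.
Lemma affine_continuousK (K : realType) (a b c d e1 e2 : K) :
  continuous (fun p : K * K => (a * p.1 + b * p.2 + e1, c * p.1 + d * p.2 + e2)).
Proof.
move=> x; apply: (@cvg_pair _ _ _ _ (nbhs (a * x.1 + b * x.2 + e1)) (nbhs (c * x.1 + d * x.2 + e2))); [exact: lin_cvgK | exact: lin_cvgK].
Qed.
End ContK.
Lemma affine_continuous (a b c d e1 e2 : R) :
  continuous (fun p : plane => (a * p.1 + b * p.2 + e1, c * p.1 + d * p.2 + e2)).
Proof. exact: (@affine_continuousK R). Qed.

Lemma iso_continuous g : is_isometry g -> continuous g.
Proof.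
move=> hg.
have gE : g = (fun p : plane => (ca g * p.1 + cb g * p.2 + (g origin).1,
                                  cc g * p.1 + cd g * p.2 + (g origin).2)).
  by apply: funext => p; rewrite [LHS](iso_rep hg p) /padd /lin.
move: (ca g) (cb g) (cc g) (cd g) (g origin) gE => a b c d e ->.
exact: affine_continuous.
Qed.

Lemma d2_eq0 p q : d2 p q = 0 -> p = q.
Proof.
case: p q => [p1 p2] [q1 q2]; rewrite /d2 /= => /eqP.
by rewrite paddr_eq0 ?sqr_ge0 // !sqrf_eq0 !subr_eq0 => /andP[/eqP -> /eqP ->].
Qed.

Lemma d2_refl p : d2 p p = 0.
Proof. by rewrite /d2 !subrr expr0n /= addr0. Qed.

Lemma iso_inj g : is_isometry g -> injective g.
Proof.
move=> hg x y hxy; apply: d2_eq0; rewrite -(iso_d2 hg) hxy d2_refl //.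
Qed.

Lemma arc_iso g e u v : is_isometry g -> arc_between e u v ->
  arc_between (g @` e) (g u) (g v).
Proof.
move=> hg [gam [hc hi -> h0 h1]]; exists (g \o gam); split.
- apply: within_continuous_comp => // y _; exact: iso_continuous hg y.
- by move=> x y hx hy /= /(iso_inj hg); apply: hi.
- by rewrite image_comp.
- by rewrite /= h0.
- by rewrite /= h1.
Qed.
Lemma translationE t x : translation t x = padd x t.
Proof. by []. Qed.

Section Grp.
Variable G : set (plane -> plane).
Hypothesis hG : isom_subgroup G.

Lemma Giso g : G g -> is_isometry g.
Proof. by case: hG => H _ _ _; apply: H. Qed.
Lemma Gid : G id.
Proof. by case: hG. Qed.
Lemma Gcomp g h : G g -> G h -> G (g \o h).
Proof. by case: hG => _ _ H _; apply: H. Qed.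
Lemma Ginv g : G g -> exists2 h, G h & (h \o g = id /\ g \o h = id).
Proof. by case: hG => _ _ _ H; apply: H. Qed.

Lemma Gconj_tr g t : G g -> G (translation t) -> G (translation (lin g t)).
Proof.
move=> hg ht; have [h hh [hgl hgr]] := Ginv hg.
have -> : translation (lin g t) = g \o (translation t \o h).
  apply: funext => x /=; rewrite translationE (iso_shift (Giso hg)).
  by have := congr1 (fun f => f x) hgr => /= ->.
by apply: Gcomp => //; apply: Gcomp.
Qed.

Lemma Gtr_neg t : G (translation t) -> G (translation (- t.1, - t.2)).
Proof.
move=> ht; have [h hh [hgl hgr]] := Ginv ht.
suff -> : translation (- t.1, - t.2) = h by [].
apply: funext => x.
have e2 := congr1 (fun f => f (x.1 - t.1, x.2 - t.2)) hgl; rewrite /= in e2.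
have e3 : translation t (x.1 - t.1, x.2 - t.2) = x.
  by case: x {e2} => x1 x2; rewrite /translation /=; congr pair; ring.
by rewrite e3 in e2; rewrite e2.
Qed.

Lemma tr_comp a b : translation a \o translation b = translation (padd a b).
Proof. apply: funext => x; rewrite /translation /padd /=; congr pair; ring. Qed.

Lemma Gtr_nat t n : G (translation t) -> G (translation (n%:R * t.1, n%:R * t.2)).
Proof.
move=> ht; elim: n => [|n IH].
  have -> : translation (0%:R * t.1, 0%:R * t.2) = id.
    by apply: funext => x; rewrite /translation /=; case: x => x1 x2 /=; congr pair; ring.
  exact: Gid.
have -> : translation (n.+1%:R * t.1, n.+1%:R * t.2) = translation t \o translation (n%:R * t.1, n%:R * t.2).
  rewrite tr_comp /padd /=; congr translation; congr pair; rewrite -natr1; ring.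
exact: Gcomp.
Qed.

Variable M : embedded_graph.
Hypothesis hact : acts_on G M.

Lemma Gvert g p : G g -> vert M p -> vert M (g p).
Proof. move=> hg hp; have [<- _] := hact hg; by exists p. Qed.

Lemma Gadj g p q : G g -> adj M p q -> adj M (g p) (g q).
Proof.
move=> hg [hp [hq [e he harc]]]; split; first exact: Gvert.
split; first exact: Gvert.
exists (g @` e); last exact: arc_iso (Giso hg) harc.
have [_ <-] := hact hg; by exists e.
Qed.

End Grp.
Lemma last_occ (w : nat -> plane) (k : nat) :
  (exists N, forall j, (N <= j)%N -> w j <> w k) ->
  exists j, [/\ w j = w k, (k <= j)%N & forall i, w i = w k -> (i <= j)%N].
Proof.
move=> [N hN].
have exP : exists i, (fun i => w i == w k) i by exists k.
have ubP : forall i, (fun i => w i == w k) i -> (i <= N)%N.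
  move=> i /eqP hi; rewrite leqNgt; apply/negP => hlt.
  by apply: (hN i) => //; apply: ltnW.
case: (ex_maxnP exP ubP) => j /eqP hj hmax.
exists j; split => //; first exact: hmax.
by move=> i hi; apply: hmax; apply/eqP.
Qed.

Lemma erase (w : nat -> plane) (rel : plane -> plane -> Prop) :
  (forall k, rel (w k) (w k.+1)) ->
  (forall k, exists N, forall j, (N <= j)%N -> w j <> w k) ->
  exists a : nat -> nat, [/\ (forall n, (n <= a n)%N), injective (w \o a) &
     forall n, rel (w (a n)) (w (a n.+1))].
Proof.
move=> hrel hfin.
have [lst hlst] := choice (fun k => last_occ (hfin k)).
pose a := fix a n := match n with 0 => lst 0%N | n'.+1 => lst (a n').+1 end.
have aS n : a n.+1 = lst (a n).+1 by [].
have a0 : a 0%N = lst 0%N by [].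
have ainc n : (a n < a n.+1)%N by rewrite aS; case: (hlst (a n).+1).
have amono m n : (m < n)%N -> (a m < a n)%N.
  elim: n => // n IH; rewrite ltnS leq_eqVlt => /orP[/eqP ->|hmn]; first exact: ainc.
  exact: ltn_trans (IH hmn) (ainc n).
have amax m i : w i = w (a m) -> (i <= a m)%N.
  case: m => [|m] hi.
    by case: (hlst 0%N) => e _ hm; apply: hm; rewrite hi a0 e.
  by case: (hlst (a m).+1) => e _ hm; apply: hm; rewrite hi aS e.
exists a; split.
- elim=> // n IH; exact: leq_ltn_trans IH (ainc n).
- move=> m n /= hmn; case: (ltngtP m n) => // hlt.
    by have := amax m (a n) (esym hmn); rewrite leqNgt amono.
  by have := amax n (a m) hmn; rewrite leqNgt amono.
- move=> n; rewrite aS; case: (hlst (a n).+1) => e _ _; rewrite e; exact: hrel.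
Qed.

Lemma crt_walk (rel : plane -> plane -> Prop) x y : clos_refl_trans _ rel x y ->
  exists n (p : nat -> plane), [/\ p 0%N = x, p n = y & forall i, (i < n)%N -> rel (p i) (p i.+1)].
Proof.
move=> /clos_rt_rt1n_iff; elim => [z|z1 z2 z3 h12 _ [n [p [p0 pn hp]]]].
  by exists 0%N, (fun _ => z); split.
exists n.+1, (fun i => if i is i'.+1 then p i' else z1); split => //.
by case=> [|i] /= hi; [rewrite p0 | apply: hp].
Qed.
From mathcomp Require Import zify.
Definition sh (t : plane) (m : nat) : plane := (m%:R * t.1, m%:R * t.2).

Lemma dot_tr s p t : dot (translation s p) t = dot p t + dot s t.
Proof. rewrite /dot /translation /=; ring. Qed.

Lemma dot_sh t m : dot (sh t m) t = m%:R * dot t t.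
Proof. rewrite /dot /sh /=; ring. Qed.

Lemma eventually_big (B c K : R) : 0 < c -> exists m : nat, K < B + m%:R * c.
Proof.
move=> hc; set x := `|(K - B) / c|.
have hx : 0 <= x by rewrite /x normr_ge0.
exists (Num.bound x).
have h1 := archi_boundP hx.
have h2 : (K - B) / c <= x by rewrite /x ler_norm.
have h3 : (K - B) / c < (Num.bound x)%:R by exact: le_lt_trans h2 h1.
have h4 : K - B < (Num.bound x)%:R * c.
  by rewrite -ltr_pdivrMr.
lra.
Qed.

Lemma ray_dir (G : set (plane -> plane)) (M : embedded_graph) (t v0 : plane) :
  isom_subgroup G -> acts_on G M ->
  (forall u v, vert M u -> vert M v -> clos_refl_trans _ (adj M) u v) ->
  vert M v0 -> G (translation t) -> 0 < dot t t ->
  exists r, is_ray M r /\ forall K, exists N, forall k, (N <= k)%N -> K < dot (r k) t.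
Proof.
move=> hG hact hconn hv0 ht htt.
set v1 := translation t v0.
have hv1 : vert M v1 by exact: (Gvert hact ht hv0).
have [n [p [p0 pn hp]]] := crt_walk (hconn v0 v1 hv0 hv1).
have n0 : (0 < n)%N.
  rewrite lt0n; apply/eqP => n0; move: pn; rewrite n0 p0 /v1 /translation => e.
  have e1 : t.1 = 0 by move: (congr1 fst e) => /= ?; lra.
  have e2 : t.2 = 0 by move: (congr1 snd e) => /= ?; lra.
  by move: htt; rewrite /dot e1 e2 mulr0 addr0 ltxx.
pose w k := translation (sh t (k %/ n)%N) (p (k %% n)%N).
have hw k : adj M (w k) (w k.+1).
  rewrite /w.
  have hk := div.divn_eq k n.
  set q := (k %/ n)%N in hk *; set i := (k %% n)%N in hk *.
  have hin : (i < n)%N by rewrite /i ltn_pmod.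
  have hq : G (translation (sh t q)) by apply: Gtr_nat.
  move: hin; rewrite leq_eqVlt => /orP[/eqP hin|hin].
    have ek : k.+1 = (q.+1 * n)%N by rewrite hk; lia.
    rewrite ek mulnK // modnMl.
    have -> : translation (sh t q.+1) (p 0%N) = translation (sh t q) (p n).
      rewrite p0 pn /v1 /translation /sh /=; congr pair; rewrite -natr1; ring.
    have hi' : (i < n)%N by rewrite -hin.
    have h := hp i hi'; rewrite hin in h.
    exact: (Gadj hG hact hq).
  have ek : k.+1 = (q * n + i.+1)%N by rewrite hk addnS.
  rewrite ek divnMDl // divn_small // addn0 modnMDl modn_small //.
  by apply: (Gadj hG hact hq); apply: hp; apply: ltnW.
have [B hB] := nat_lbound n (fun i => dot (p i) t).
have hdot k : B + ((k %/ n)%N)%:R * dot t t <= dot (w k) t.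
  rewrite /w dot_tr dot_sh lerD2r; apply: hB; apply: ltnW; exact: ltn_pmod.
have hev K : exists N, forall k, (N <= k)%N -> K < dot (w k) t.
  have [m hm] := eventually_big B K htt.
  exists (m * n)%N => k hk.
  apply: lt_le_trans hm _; apply: le_trans (hdot k).
  rewrite lerD2l ler_pM2r // ler_nat leq_divRL //.
have hfin k : exists N, forall j, (N <= j)%N -> w j <> w k.
  have [N hN] := hev (dot (w k) t); exists N => j hj e.
  by have := hN j hj; rewrite e ltxx.
have [a [ha hinj hadj]] := erase hw hfin.
exists (w \o a); split; first by split.
move=> K; have [N hN] := hev K; exists N => k hk /=; apply: hN.
exact: leq_trans hk (ha k).
Qed.
Lemma two_ends_contra (M : embedded_graph) (X : plane -> R) (D : R) : 0 <= D ->
  (forall p q, adj M p q -> `|X p - X q| <= D) ->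
  finite_set [set p | vert M p /\ `|X p| <= D] ->
  (exists r, is_ray M r /\ forall K, exists N, forall k, (N <= k)%N -> K < X (r k)) ->
  (exists s, is_ray M s /\ forall K, exists N, forall k, (N <= k)%N -> K < - X (s k)) ->
  (forall r s, is_ray M r -> is_ray M s -> equiv_rays M r s) -> False.
Proof.
move=> hD0 hD hfin [r [hr hrK]] [s [hs hsK]] hone.
set S := [set p | vert M p /\ `|X p| <= D].
have hSV : S `<=` vert M by move=> p [].
have [i [j [hri hsj hpath]]] := hone r s hr hs S hfin hSV.
have outS p : vert M p -> ~ S p -> D < `|X p|.
  move=> hv hn; rewrite ltNge; apply/negP => hle; apply: hn; by split.
have inv p q : clos_refl_trans _ (adj_minus M S) p q -> (D < X p <-> D < X q).
  elim => [x y [hxy [hnx hny]]| x | x y z _ h1 _ h2].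
  - have hvx : vert M x by case: hxy.
    have hvy : vert M y by case: hxy => _ [].
    have h := hD x y hxy.
    have ox := outS x hvx hnx; have oy := outS y hvy hny.
    move: h ox oy; rewrite ler_norml !ltr_normr; move=> /andP[h1 h2] /orP[k1|k1] /orP[k2|k2];
      split => ?; lra.
  - by [].
  - by rewrite h1 h2.
have rv k : vert M (r k) by case: hr => _ h; case: (h k).
have sv k : vert M (s k) by case: hs => _ h; case: (h k).
have chain (f : nat -> plane) m : (forall k, adj M (f k) (f k.+1)) ->
    (forall k, (m <= k)%N -> ~ S (f k)) ->
    forall k, (m <= k)%N -> clos_refl_trans _ (adj_minus M S) (f m) (f k).
  move=> hadj hn; elim => [|k IH].
    by rewrite leqn0 => /eqP ->; apply: rt_refl.
  rewrite leq_eqVlt => /orP[/eqP <-|hk]; first exact: rt_refl.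
  apply: rt_trans (IH hk) _; apply: rt_step; split; first exact: hadj.
  by split; apply: hn => //; apply: ltnW.
have [N1 hN1] := hrK D.
have hr1 : D < X (r i).
  have hm : (i <= maxn i N1)%N by rewrite leq_maxl.
  have := chain r i (fun k => proj2 hr k) hri (maxn i N1) hm.
  move/inv => ->; apply: hN1; exact: leq_maxr.
have [N2 hN2] := hsK D.
have hs1 : ~ (D < X (s j)).
  have hm : (j <= maxn j N2)%N by rewrite leq_maxl.
  have := chain s j (fun k => proj2 hs k) hsj (maxn j N2) hm.
  move/inv => ->; have := hN2 (maxn j N2) (leq_maxr _ _); move=> ? ?; lra.
by apply: hs1; rewrite -(inv _ _ hpath).
Qed.
Definition perp (u : plane) : plane := (- u.2, u.1).
Definition scl (k : R) (p : plane) : plane := (k * p.1, k * p.2).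

Lemma dot_padd a b c : dot (padd a b) c = dot a c + dot b c.
Proof. rewrite /dot /padd /=; ring. Qed.
Lemma dot_scl k a c : dot (scl k a) c = k * dot a c.
Proof. rewrite /dot /scl /=; ring. Qed.
Lemma dot_sclr k a c : dot a (scl k c) = k * dot a c.
Proof. rewrite /dot /scl /=; ring. Qed.
Lemma dotC a b : dot a b = dot b a.
Proof. rewrite /dot; ring. Qed.
Lemma dot_perp u : dot u (perp u) = 0.
Proof. rewrite /dot /perp /=; ring. Qed.
Lemma dot_perp2 u : dot (perp u) (perp u) = dot u u.
Proof. rewrite /dot /perp /=; ring. Qed.

Lemma pt_eq (u p q : plane) : dot u u != 0 ->
  dot p u = dot q u -> dot p (perp u) = dot q (perp u) -> p = q.
Proof.
case: p q u => [p1 p2] [q1 q2] [u1 u2]; rewrite /dot /perp /= => hu h1 h2.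
have e1 : (p1 - q1) * (u1 * u1 + u2 * u2) =
   u1 * ((p1 * u1 + p2 * u2) - (q1 * u1 + q2 * u2)) - u2 * ((p1 * - u2 + p2 * u1) - (q1 * - u2 + q2 * u1)) by ring.
have e2 : (p2 - q2) * (u1 * u1 + u2 * u2) =
   u2 * ((p1 * u1 + p2 * u2) - (q1 * u1 + q2 * u2)) + u1 * ((p1 * - u2 + p2 * u1) - (q1 * - u2 + q2 * u1)) by ring.
rewrite h1 h2 !subrr !mulr0 subr0 in e1; rewrite h1 h2 !subrr !mulr0 addr0 in e2.
move/eqP: e1; rewrite mulf_eq0 (negbTE hu) orbF subr_eq0 => /eqP ->.
by move/eqP: e2; rewrite mulf_eq0 (negbTE hu) orbF subr_eq0 => /eqP ->.
Qed.

Lemma lin_scl g k p : lin g (scl k p) = scl k (lin g p).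
Proof. rewrite /lin /scl /=; congr pair; ring. Qed.

Lemma sq1 (l : R) : l * l = 1 -> l = 1 \/ l = -1.
Proof.
move=> h.
have e : (l - 1) * (l + 1) = 0.
  have -> : (l - 1) * (l + 1) = l * l - 1 by ring.
  by rewrite h subrr.
move/eqP: e; rewrite mulf_eq0 => /orP[/eqP ?|/eqP ?]; [left|right]; lra.
Qed.

Section Step2.
Variable G : set (plane -> plane).
Hypothesis hG : isom_subgroup G.
Variable u : plane.
Hypothesis hu0 : dot u u != 0.
Hypothesis hu : G (translation u).
Hypothesis HT : forall w, G (translation w) -> dot w (perp u) = 0.

Lemma lin_XY g : G g -> exists l m : R, [/\ l * l = 1, m * m = 1 &
  forall w, dot (lin g w) u = l * dot w u /\ dot (lin g w) (perp u) = m * dot w (perp u)].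
Proof.
move=> hg; have gi := Giso hG hg.
have hY : dot (lin g u) (perp u) = 0 by apply: HT; apply: Gconj_tr.
set l := dot (lin g u) u / dot u u.
have hLu : lin g u = scl l u.
  apply: (pt_eq hu0).
    by rewrite dot_scl /l mulfVK.
  by rewrite hY dot_scl dot_perp mulr0.
have hl : l * l = 1.
  have := lin_dot gi u u; rewrite hLu dot_scl dotC dot_scl => e.
  have : (l * l - 1) * dot u u = 0 by rewrite mulrBl -mulrA e mul1r subrr.
  by move/eqP; rewrite mulf_eq0 (negbTE hu0) orbF subr_eq0 => /eqP.
have hX w : dot (lin g w) u = l * dot w u.
  have := lin_dot gi w u; rewrite hLu dot_sclr => e.
  by rewrite -e mulrA hl mul1r.
have hXp : dot (lin g (perp u)) u = 0.
  have := lin_dot gi (perp u) u; rewrite hLu dot_sclr [dot (perp u) u]dotC dot_perp => /eqP.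
  rewrite mulf_eq0 => /orP[/eqP hl0|/eqP //].
  by move: hl; rewrite hl0 mul0r => /esym/eqP; rewrite oner_eq0.
set m := dot (lin g (perp u)) (perp u) / dot u u.
have hLp : lin g (perp u) = scl m (perp u).
  apply: (pt_eq hu0).
    by rewrite hXp dot_scl dotC dot_perp mulr0.
  by rewrite dot_scl dot_perp2 /m mulfVK.
have hm : m * m = 1.
  have := lin_dot gi (perp u) (perp u); rewrite hLp dot_scl dotC dot_scl dot_perp2 => e.
  have : (m * m - 1) * dot u u = 0 by rewrite mulrBl -mulrA e mul1r subrr.
  by move/eqP; rewrite mulf_eq0 (negbTE hu0) orbF subr_eq0 => /eqP.
exists l, m; split => // w; split; first exact: hX.
have := lin_dot gi w (perp u); rewrite hLp dot_sclr => e.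
by rewrite -e mulrA hm mul1r.
Qed.

Lemma iso_dot g (gi : is_isometry g) p c : dot (g p) c = dot (lin g p) c + dot (g origin) c.
Proof. by rewrite (iso_rep gi p) dot_padd. Qed.

Lemma ymove g : G g -> (forall p, dot (g p) (perp u) = dot p (perp u)) \/
   (forall p, dot (g p) (perp u) = - dot p (perp u) + dot (g origin) (perp u)).
Proof.
move=> hg; have gi := Giso hG hg.
have [l [m [hl hm hXY]]] := lin_XY hg.
have [m1|m1] := sq1 hm; last first.
  by right => p; rewrite (iso_dot gi) (proj2 (hXY p)) m1 mulN1r.
left.
have hgg : G (g \o g) by apply: Gcomp.
have ggi := Giso hG hgg.
have hlin : forall w, lin (g \o g) w = w.
  move=> w; rewrite (lin_comp gi gi); apply: (pt_eq hu0).
    by rewrite !(proj1 (hXY _)) mulrA hl mul1r.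
  by rewrite !(proj2 (hXY _)) m1 !mul1r.
have := lin_id_translation ggi hlin => e.
have ht : dot ((g \o g) origin) (perp u) = 0 by apply: HT; rewrite -e.
move: ht; rewrite /= (iso_dot gi (g origin)) (proj2 (hXY _)) m1 mul1r => ht.
have t0 : dot (g origin) (perp u) = 0 by lra.
by move=> p; rewrite (iso_dot gi) (proj2 (hXY p)) m1 mul1r t0 addr0.
Qed.

Lemma dot_origin c : dot origin c = 0.
Proof. rewrite /dot /origin /=; ring. Qed.

Lemma ybound : exists t0, forall g, G g -> forall p,
  dot (g p) (perp u) = dot p (perp u) \/ dot (g p) (perp u) = t0 - dot p (perp u).
Proof.
case: (pselect (exists h, G h /\ ~ forall p, dot (h p) (perp u) = dot p (perp u))); last first.
  move=> hno; exists 0 => g hg p; left.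
  case: (pselect (forall p, dot (g p) (perp u) = dot p (perp u))) => [H|H]; first exact: H.
  by exfalso; apply: hno; exists g.
move=> [h [hh hnot]].
have hr : forall p, dot (h p) (perp u) = - dot p (perp u) + dot (h origin) (perp u).
  by case: (ymove hh).
move: (dot (h origin) (perp u)) hr => th hr.
exists th => g hg p.
case: (ymove hg) => hgp; first by left.
move: (dot (g origin) (perp u)) hgp => tg hgp.
right; rewrite hgp.
have hk : G (g \o h) by apply: Gcomp.
case: (ymove hk) => hkp.
  have := hkp origin; rewrite /= hgp hr dot_origin => e.
  lra.
exfalso.
move: (dot ((g \o h) origin) (perp u)) hkp => tk hkp.
have e0 := hkp origin; have e1 := hkp (perp u).
rewrite /= hgp hr dot_origin in e0; rewrite /= hgp hr dot_perp2 in e1.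
have : dot u u = 0 by lra.
by apply/eqP.
Qed.

End Step2.
Lemma lin_idf w : lin id w = w.
Proof. case: w => w1 w2; rewrite /lin /ca /cb /cc /cd /origin /=; congr pair; ring. Qed.

Lemma det_id : det id = 1.
Proof. rewrite /det /ca /cb /cc /cd /origin /=; ring. Qed.

Lemma abs_le_sq (x : R) : `|x| <= 1 + x ^+ 2.
Proof.
case: (lerP 0 x) => hx; [rewrite ger0_norm // | rewrite ltr0_norm //]; nra.
Qed.

Lemma coord_bound p q M : d2 p q <= M ->
  `|p.1| <= `|q.1| + 1 + M /\ `|p.2| <= `|q.2| + 1 + M.
Proof.
rewrite /d2 => h.
have s1 := sqr_ge0 (p.1 - q.1); have s2 := sqr_ge0 (p.2 - q.2).
have a1 := abs_le_sq (p.1 - q.1); have a2 := abs_le_sq (p.2 - q.2).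
have t1 : `|p.1| <= `|q.1| + `|p.1 - q.1|.
  by have := ler_normD q.1 (p.1 - q.1); rewrite addrC subrK addrC.
have t2 : `|p.2| <= `|q.2| + `|p.2 - q.2|.
  by have := ler_normD q.2 (p.2 - q.2); rewrite addrC subrK addrC.
split; lra.
Qed.

Section Step1.
Variable G : set (plane -> plane).
Hypothesis hG : isom_subgroup G.
Hypothesis HT0 : forall w, G (translation w) -> w = origin.

Lemma lin_id_id g : G g -> (forall w, lin g w = w) -> g = id.
Proof.
move=> hg hl; have e := lin_id_translation (Giso hG hg) hl.
have ht : G (translation (g origin)) by rewrite -e.
rewrite e (HT0 ht); apply: funext => x; rewrite /translation /origin /=.
by case: x => x1 x2 /=; rewrite !addr0.
Qed.

Lemma same_lin f f' : G f -> G f' -> (forall w, lin f w = lin f' w) -> f = f'.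
Proof.
move=> hf hf' hl; have [h hh [hl1 hr1]] := Ginv hG hf'.
have hk : G (f \o h) by apply: Gcomp.
have fi := Giso hG hf; have f'i := Giso hG hf'; have hi := Giso hG hh.
have k1 : f \o h = id.
  apply: lin_id_id => // w.
  by rewrite (lin_comp fi hi) hl -(lin_comp f'i hi) hr1 lin_idf.
apply: funext => x.
have e1 := congr1 (fun F => F x) hl1; rewrite /= in e1.
have e2 := congr1 (fun F => F (f' x)) k1; rewrite /= in e2.
by rewrite -e2 e1.
Qed.

Lemma det_inv g h : G g -> G h -> g \o h = id -> det g * det h = 1.
Proof.
move=> hg hh e; rewrite -(det_comp (Giso hG hg) (Giso hG hh)) e; exact: det_id.
Qed.

Lemma rot_fix r : G r -> det r = 1 -> r <> id ->
  (exists c, r c = c) /\ (forall p q, r p = p -> r q = q -> p = q).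
Proof.
move=> hr d1 rn.
have ri := Giso hG hr.
have [cbE cdE] := det_form ri; rewrite d1 !mulr1 in cbE cdE.
have [h1 _ _ _ _] := iso_coefs ri.
set a := ca r in cbE cdE h1; set c := cc r in cbE cdE h1.
set e := r origin.
have rE : forall p, r p = (a * p.1 - c * p.2 + e.1, c * p.1 + a * p.2 + e.2).
  move=> p; rewrite (iso_rep ri p) /padd /lin cbE cdE -/a -/c -/e /=; congr pair; ring.
have an1 : a != 1.
  apply/negP => /eqP a1.
  have c0 : c = 0.
    have : c ^+ 2 = 0 by rewrite a1 in h1; lra.
    by move/eqP; rewrite sqrf_eq0 => /eqP.
  apply: rn; apply: lin_id_id => // w.
  rewrite /lin cbE cdE -/a -/c a1 c0; case: w => w1 w2 /=; congr pair; ring.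
have alt : a < 1.
  have : a <= 1 by nra.
  by rewrite le_eqVlt (negbTE an1).
set D := (1 - a) ^+ 2 + c ^+ 2.
have Dp : 0 < D by rewrite /D; nra.
have Dn : D != 0 by rewrite gt_eqF.
split.
  exists (((1 - a) * e.1 - c * e.2) / D, (c * e.1 + (1 - a) * e.2) / D).
  rewrite rE /=; congr pair; rewrite /D; field; by rewrite -/D.
move=> [p1 p2] [q1 q2]; rewrite !rE /= => hp hq.
have E1 : (1 - a) * (p1 - q1) + c * (p2 - q2) = 0.
  have := congr1 fst hp; have := congr1 fst hq; rewrite /=; lra.
have E2 : - c * (p1 - q1) + (1 - a) * (p2 - q2) = 0.
  have := congr1 snd hp; have := congr1 snd hq; rewrite /=; lra.
have F1 : D * (p1 - q1) = (1 - a) * ((1 - a) * (p1 - q1) + c * (p2 - q2)) - c * (- c * (p1 - q1) + (1 - a) * (p2 - q2)).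
  by rewrite /D; ring.
have F2 : D * (p2 - q2) = c * ((1 - a) * (p1 - q1) + c * (p2 - q2)) + (1 - a) * (- c * (p1 - q1) + (1 - a) * (p2 - q2)).
  by rewrite /D; ring.
rewrite E1 E2 !mulr0 subrr in F1; rewrite E1 E2 !mulr0 addr0 in F2.
move/eqP: F1; rewrite mulf_eq0 (negbTE Dn) /= subr_eq0 => /eqP ->.
by move/eqP: F2; rewrite mulf_eq0 (negbTE Dn) /= subr_eq0 => /eqP ->.
Qed.

End Step1.
Lemma step1_bound (G : set (plane -> plane)) (hG : isom_subgroup G)
  (HT0 : forall w, G (translation w) -> w = origin) (v : plane) :
  exists C, forall g, G g -> `|(g v).1| <= C /\ `|(g v).2| <= C.
Proof.
case: (pselect (exists r, [/\ G r, det r = 1 & r <> id])).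
  move=> [r [hr d1 rn]].
  have [[c0 hc0] huniq] := rot_fix hG HT0 hr d1 rn.
  have ri := Giso hG hr.
  have hfix : forall h, G h -> h c0 = c0.
    move=> h hh; have [hi hhi [hl hr']] := Ginv hG hh.
    have hii := Giso hG hhi; have hhh := Giso hG hh.
    set r' := h \o (r \o hi).
    have hr'G : G r' by apply: Gcomp => //; apply: Gcomp.
    have r'i := Giso hG hr'G.
    have d' : det r' = 1.
      rewrite /r' (det_comp hhh (iso_comp ri hii)) (det_comp ri hii) d1 mul1r.
      exact: (det_inv hG hh hhi hr').
    have hix x : hi (h x) = x by have := congr1 (fun F => F x) hl.
    have rn' : r' <> id.
      move=> e; apply: rn; apply: funext => x /=.
      have := congr1 (fun F => F (h x)) e; rewrite /r' /= hix.
      exact: (iso_inj hhh).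
    have [_ huniq'] := rot_fix hG HT0 hr'G d' rn'.
    have comm : r \o r' = r' \o r.
      apply: (same_lin hG HT0); try by apply: Gcomp.
      move=> w; rewrite (lin_comp ri r'i) (lin_comp r'i ri).
      exact: rot_commute.
    have e1 : r' c0 = c0.
      apply: huniq => //.
      have := congr1 (fun F => F c0) comm; rewrite /= hc0 => ->; by [].
    have e2 : r' (h c0) = h c0 by rewrite /r' /= hix hc0.
    exact: huniq' e2 e1.
  exists (`|c0.1| + `|c0.2| + 1 + d2 v c0) => g hg.
  have gi := Giso hG hg.
  have h0 : d2 (g v) c0 <= d2 v c0 by rewrite -{1}(hfix g hg) (iso_d2 gi).
  have [b1 b2] := coord_bound h0.
  have n1 := normr_ge0 c0.1; have n2 := normr_ge0 c0.2.
  split; lra.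
move=> hno.
have hrot : forall r, G r -> det r = 1 -> r = id.
  move=> r hr d1; case: (pselect (r = id)) => // rn.
  by exfalso; apply: hno; exists r.
have [g1 hg1] : exists g1, forall g, G g -> g = id \/ g = g1.
  case: (pselect (exists g1, G g1 /\ g1 <> id)).
    move=> [g1 [hg1 n1]]; exists g1 => g hg.
    case: (pselect (g = id)) => gn; first by left.
    right.
    have dm1 : forall k, G k -> k <> id -> det k = -1.
      move=> k hk kn; case: (det_pm1 (Giso hG hk)) => // dk.
      by exfalso; apply: kn; apply: hrot.
    have [g1i hg1i [hl1 hr1]] := Ginv hG hg1.
    have dg1i : det g1i = -1.
      have := det_inv hG hg1 hg1i hr1; rewrite (dm1 g1 hg1 n1) => e; lra.
    have hk : G (g \o g1i) by apply: Gcomp.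
    have kid : g \o g1i = id.
      apply: hrot => //.
      rewrite (det_comp (Giso hG hg) (Giso hG hg1i)) dg1i (dm1 g hg gn); ring.
    apply: funext => x.
    have := congr1 (fun F => F (g1 x)) kid; rewrite /=.
    by have := congr1 (fun F => F x) hl1; rewrite /= => ->.
  move=> hnone; exists id => g hg; left.
  case: (pselect (g = id)) => // gn; exfalso; apply: hnone; by exists g.
exists (`|v.1| + `|v.2| + `|(g1 v).1| + `|(g1 v).2|) => g hg.
have n1 := normr_ge0 v.1; have n2 := normr_ge0 v.2.
have n3 := normr_ge0 (g1 v).1; have n4 := normr_ge0 (g1 v).2.
by case: (hg1 g hg) => ->; split; lra.
Qed.
Lemma orbit_bound (G : set (plane -> plane)) (M : embedded_graph) (Q : plane -> R -> Prop) :
  isom_subgroup G -> quasi_transitive G M ->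
  (forall v, vert M v -> exists B, forall B', B <= B' -> forall g, G g -> Q (g v) B') ->
  exists B, forall p, vert M p -> Q p B.
Proof.
move=> hG [hact hfin] hv.
have hfam : forall O : set plane, [set O | (exists2 v : plane, vert M v & O = [set g v | g in G])] O ->
    exists B, forall B', B <= B' -> (fun O B => forall p, O p -> Q p B) O B'.
  move=> O [v hvv e]; have [B hB] := hv v hvv.
  exists B => B' hB' p; rewrite e => -[g hg <-]; exact: hB.
have [B hB] := fin_ubound hfin hfam.
exists B => p hp; apply: (hB [set g p | g in G]).
  by exists p.
by exists id => //; exact: Gid.
Qed.

Lemma indep_of_det (u w : plane) : dot w (perp u) != 0 -> lin_indep2 u w.
Proof.
move=> hd a b e.
have e1 := congr1 fst e; have e2 := congr1 snd e; rewrite /origin /= in e1 e2.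
move: hd; rewrite /dot /perp /= => hd.
have ea : a * (w.1 * - u.2 + w.2 * u.1) = w.2 * (a * u.1 + b * w.1) - w.1 * (a * u.2 + b * w.2) by ring.
have eb : b * (w.1 * - u.2 + w.2 * u.1) = - (u.2 * (a * u.1 + b * w.1) - u.1 * (a * u.2 + b * w.2)) by ring.
rewrite e1 e2 !mulr0 subrr in ea; rewrite e1 e2 !mulr0 subrr oppr0 in eb.
move/eqP: ea; rewrite mulf_eq0 (negbTE hd) orbF => /eqP ->.
by move/eqP: eb; rewrite mulf_eq0 (negbTE hd) orbF => /eqP ->.
Qed.

Lemma dot_ge0 u : 0 <= dot u u.
Proof. rewrite /dot; nra. Qed.

Lemma coords_from_XY (u p : plane) (D B : R) : 0 < dot u u ->
  `|dot p u| <= D -> `|dot p (perp u)| <= B ->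
  `|p.1| <= (D + B) * (`|u.1| + `|u.2|) / dot u u /\
  `|p.2| <= (D + B) * (`|u.1| + `|u.2|) / dot u u.
Proof.
move=> hu hX hY.
have e1 : p.1 * dot u u = dot p u * u.1 - dot p (perp u) * u.2 by rewrite /dot /perp /=; ring.
have e2 : p.2 * dot u u = dot p u * u.2 + dot p (perp u) * u.1 by rewrite /dot /perp /=; ring.
have n1 := normr_ge0 u.1; have n2 := normr_ge0 u.2.
have nD : 0 <= D by apply: le_trans hX.
have nB : 0 <= B by apply: le_trans hY.
split; rewrite ler_pdivlMr //.
  rewrite -(gtr0_norm hu) -normrM e1.
  apply: le_trans (ler_normB _ _) _; rewrite !normrM.
  have := ler_pM (normr_ge0 _) n1 hX (lexx `|u.1|).
  have := ler_pM (normr_ge0 _) n2 hY (lexx `|u.2|).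
  nra.
rewrite -(gtr0_norm hu) -normrM e2.
apply: le_trans (ler_normD _ _) _; rewrite !normrM.
have := ler_pM (normr_ge0 _) n2 hX (lexx `|u.2|).
have := ler_pM (normr_ge0 _) n1 hY (lexx `|u.1|).
nra.
Qed.

Lemma two_translations (M : embedded_graph) (G : set (plane -> plane)) :
  (forall u v, vert M u -> vert M v -> clos_refl_trans _ (adj M) u v) ->
  ~ finite_set (vert M) -> locally_finite_graph M ->
  (forall r s, is_ray M r -> is_ray M s -> equiv_rays M r s) ->
  locally_finite_vertices M -> isom_subgroup G -> quasi_transitive G M ->
  exists u v, [/\ lin_indep2 u v, G (translation u) & G (translation v)].
Proof.
move=> hconn hinf hlfg hone hlfv hG hqt.
have hact := proj1 hqt.
case: (pselect (exists u v, [/\ lin_indep2 u v, G (translation u) & G (translation v)])) => // hno.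
exfalso.
have [v0 hv0] : exists v0, vert M v0.
  case: (pselect (exists v0, vert M v0)) => // hn; exfalso; apply: hinf.
  suff -> : vert M = set0 by [].
  by apply/seteqP; split => x // hx; apply: hn; exists x.
case: (pselect (exists u, G (translation u) /\ u <> origin)); last first.
  move=> hnu.
  have HT0 : forall w, G (translation w) -> w = origin.
    move=> w hw; case: (pselect (w = origin)) => // wn; exfalso; apply: hnu; by exists w.
  have hpv : forall v, vert M v -> exists C, forall C', C <= C' -> forall g, G g ->
      (fun p C => `|p.1| <= C /\ `|p.2| <= C) (g v) C'.
    move=> v hv; have [C hC] := step1_bound hG HT0 v; exists C => C' hC' g hg /=.
    by have [h1 h2] := hC g hg; split; apply: le_trans hC'.
  have [C hC] := orbit_bound (Q := fun p C => `|p.1| <= C /\ `|p.2| <= C) hG hqt hpv.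
  apply: hinf; apply: sub_finite_set (box_finite C hlfv).
  by move=> p hp; have [h1 h2] := hC p hp.
move=> [u [hu un]].
have huu : 0 < dot u u.
  rewrite lt_def dot_ge0 andbT; apply/eqP => h0; apply: un.
  move: h0; rewrite /dot => h0; case: u {hu} h0 => u1 u2 /= h0.
  have : u1 = 0 by nra.
  have : u2 = 0 by nra.
  by move=> -> ->.
have hu0 : dot u u != 0 by rewrite gt_eqF.
have HT : forall w, G (translation w) -> dot w (perp u) = 0.
  move=> w hw; case: (pselect (dot w (perp u) = 0)) => // hd; exfalso.
  apply: hno; exists u, w; split => //; apply: indep_of_det; exact/eqP.
have hpvX : forall v, vert M v -> exists B, forall B', B <= B' -> forall g, G g ->
    (fun p D => forall q, adj M p q -> `|dot p u - dot q u| <= D) (g v) B'.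
  move=> v hv.
  have hfinN := hlfg v hv.
  have [B hB] := fin_ubound (Q := fun q B => `|dot v u - dot q u| <= B) hfinN
    (fun q hq => ex_intro _ `|dot v u - dot q u| (fun B' hB' => hB')).
  exists B => B' hB' g hg q hq.
  have [gi hgi [hl hr]] := Ginv hG hg.
  have gii := Giso hG hg.
  have hq' : adj M v (gi q).
    have := Gadj hG hact hgi hq; by have := congr1 (fun F => F v) hl; rewrite /= => ->.
  have eq : q = g (gi q) by have := congr1 (fun F => F q) hr.
  have [l [m [hl1 hm1 hXY]]] := lin_XY hG hu0 hu HT hg.
  rewrite [in dot q u]eq (iso_dot gii v) (iso_dot gii (gi q)) !(proj1 (hXY _)).
  have -> : l * dot v u + dot (g origin) u - (l * dot (gi q) u + dot (g origin) u)
    = l * (dot v u - dot (gi q) u) by ring.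
  rewrite normrM.
  have hl' : `|l| = 1 by case: (sq1 hl1) => ->; rewrite ?normrN normr1.
  rewrite hl' mul1r; apply: le_trans hB'; exact: hB.

have [D0 hD0] := orbit_bound (Q := fun p D => forall q, adj M p q -> `|dot p u - dot q u| <= D) hG hqt hpvX.
have hpvY : forall v, vert M v -> exists B, forall B', B <= B' -> forall g, G g ->
    (fun p B => `|dot p (perp u)| <= B) (g v) B'.
  move=> v hv.
  have [t0 ht0] := ybound hG hu0 hu HT.
  exists (`|dot v (perp u)| + `|t0|) => B' hB' g hg /=.
  apply: le_trans hB'.
  case: (ht0 g hg v) => ->; first by rewrite lerDl normr_ge0.
  by apply: le_trans (ler_normB _ _) _; rewrite addrC.
have [BY hBY] := orbit_bound (Q := fun p B => `|dot p (perp u)| <= B) hG hqt hpvY.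
set D := Num.max D0 0.
have hD : 0 <= D by rewrite le_max lexx orbT.
have hadjD : forall p q, adj M p q -> `|dot p u - dot q u| <= D.
  move=> p q hpq; have hp : vert M p by case: hpq.
  apply: le_trans (hD0 p hp q hpq) _; by rewrite le_max lexx.
set C := (D + BY) * (`|u.1| + `|u.2|) / dot u u.
have hS : finite_set [set p | vert M p /\ `|dot p u| <= D].
  apply: sub_finite_set (box_finite C hlfv).
  move=> p [hp hX]; split => //.
  exact: coords_from_XY hX (hBY p hp).
have [r [hr hrK]] := ray_dir hG hact hconn hv0 hu huu.
have hnu := Gtr_neg hG hu.
have hnn : 0 < dot (- u.1, - u.2) (- u.1, - u.2).
  by move: huu; rewrite /dot /=; nra.
have [s [hs hsK]] := ray_dir hG hact hconn hv0 hnu hnn.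
apply: (two_ends_contra (X := fun p => dot p u) hD hadjD hS) => //.
  by exists r.
exists s; split => // K; have [N hN] := hsK K; exists N => k hk.
have := hN k hk; rewrite /dot /=.
have -> : (s k).1 * - u.1 + (s k).2 * - u.2 = - ((s k).1 * u.1 + (s k).2 * u.2) by ring.
by [].
Qed.
Lemma edist_ge0 p q : 0 <= Defs.edist p q.
Proof. exact: sqrtr_ge0. Qed.

Lemma edist_coord p q : `|p.1 - q.1| <= Defs.edist p q /\ `|p.2 - q.2| <= Defs.edist p q.
Proof.
rewrite edistE /d2; split; rewrite -sqrtr_sqr; apply: ler_wsqrtr.
  by rewrite lerDl sqr_ge0.
by rewrite lerDr sqr_ge0.
Qed.

Lemma edist_pos p q : p <> q -> 0 < Defs.edist p q.
Proof.
move=> pq; rewrite edistE sqrtr_gt0 lt_def d2_ge0 andbT.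
by apply/eqP => /d2_eq0.
Qed.

Lemma fin_sep (F : set plane) : finite_set F ->
  exists e, 0 < e /\ forall p, F p -> forall q, F q -> p <> q -> e <= Defs.edist p q.
Proof.
move=> hF.
have hper : forall p, F p -> exists e, 0 < e /\ forall e', 0 < e' -> e' <= e ->
    (forall q, F q -> p <> q -> e' <= Defs.edist p q).
  move=> p hp.
  have hq : forall q, F q -> exists e, 0 < e /\ forall e', 0 < e' -> e' <= e ->
      (p <> q -> e' <= Defs.edist p q).
    move=> q _; case: (pselect (p = q)) => [->|pq].
      by exists 1; split => // e' _ _ h; exfalso; apply: h.
    exists (Defs.edist p q); split; first exact: edist_pos.
    by move=> e' _ hle _.
  have [e [he hQ]] := fin_lbound (Q := fun q e => p <> q -> e <= Defs.edist p q) hF hq.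
  by exists e; split => // e' he' hle q hq' pq; apply: le_trans hle (hQ q hq' pq).
exact: (fin_lbound (Q := fun p e => forall q, F q -> p <> q -> e <= Defs.edist p q) hF hper).
Qed.

Lemma det_of_indep u v : lin_indep2 u v -> u.1 * v.2 - u.2 * v.1 != 0.
Proof.
move=> hi; apply/eqP => hd.
have e1 : (v.2 * u.1 + - u.2 * v.1, v.2 * u.2 + - u.2 * v.2) = origin.
  rewrite /origin; congr pair; last by ring.
  by rewrite -hd; ring.
have [a1 b1] := hi _ _ e1.
have e2 : (v.1 * u.1 + - u.1 * v.1, v.1 * u.2 + - u.1 * v.2) = origin.
  rewrite /origin; congr pair; first by ring.
  have -> : v.1 * u.2 + - u.1 * v.2 = - (u.1 * v.2 - u.2 * v.1) by ring.
  by rewrite hd oppr0.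
have [a2 b2] := hi _ _ e2.
have e3 : (1 * u.1 + 0 * v.1, 1 * u.2 + 0 * v.2) = origin.
  have -> : u.1 = 0 by lra.
  have -> : u.2 = 0 by lra.
  rewrite /origin; congr pair; ring.
have [c1 _] := hi _ _ e3.
by move: c1; apply/eqP; rewrite oner_eq0.
Qed.

Lemma lin_fix2 k u v : u.1 * v.2 - u.2 * v.1 != 0 ->
  lin k u = u -> lin k v = v -> forall w, lin k w = w.
Proof.
move=> hd hu hv [w1 w2].
move: hu hv; rewrite /lin; case: u hd => u1 u2; case: v => v1 v2 /= hd hu hv.
set a := ca k in hu hv *; set b := cb k in hu hv *; set c := cc k in hu hv *; set d := cd k in hu hv *.
have E1 := congr1 fst hu; have E2 := congr1 snd hu; have E3 := congr1 fst hv; have E4 := congr1 snd hv.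
rewrite /= in E1 E2 E3 E4.
have Fa : (a - 1) * (u1 * v2 - u2 * v1) = v2 * (a * u1 + b * u2 - u1) - u2 * (a * v1 + b * v2 - v1) by ring.
have Fb : b * (u1 * v2 - u2 * v1) = u1 * (a * v1 + b * v2 - v1) - v1 * (a * u1 + b * u2 - u1) by ring.
have Fc : c * (u1 * v2 - u2 * v1) = v2 * (c * u1 + d * u2 - u2) - u2 * (c * v1 + d * v2 - v2) by ring.
have Fd : (d - 1) * (u1 * v2 - u2 * v1) = u1 * (c * v1 + d * v2 - v2) - v1 * (c * u1 + d * u2 - u2) by ring.
rewrite E1 E3 !subrr !mulr0 subrr in Fa Fb.
rewrite E2 E4 !subrr !mulr0 subrr in Fc Fd.
move/eqP: Fa; rewrite mulf_eq0 (negbTE hd) orbF subr_eq0 => /eqP ha.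
move/eqP: Fb; rewrite mulf_eq0 (negbTE hd) orbF => /eqP hb.
move/eqP: Fc; rewrite mulf_eq0 (negbTE hd) orbF => /eqP hc.
move/eqP: Fd; rewrite mulf_eq0 (negbTE hd) orbF subr_eq0 => /eqP hd'.
rewrite ha hb hc hd'; congr pair; ring.
Qed.
Lemma padd_cancel (a b c : plane) : padd a b = padd a c -> b = c.
Proof.
case: a b c => [a1 a2] [b1 b2] [c1 c2]; rewrite /padd /= => e.
have e1 := congr1 fst e; have e2 := congr1 snd e; rewrite /= in e1 e2.
by congr pair; lra.
Qed.

Lemma discreteness (M : embedded_graph) (G : set (plane -> plane)) (u v v0 : plane) :
  locally_finite_vertices M -> isom_subgroup G -> acts_on G M -> vert M v0 ->
  lin_indep2 u v -> G (translation u) -> G (translation v) -> discrete_isom_group G.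
Proof.
move=> hlfv hG hact hv0 hind hu hv g hg.
set w1 := v0; set w2 := translation u v0; set w3 := translation v v0.
have hw1 : vert M w1 by [].
have hw2 : vert M w2 by exact: (Gvert hact hu hv0).
have hw3 : vert M w3 by exact: (Gvert hact hv hv0).
set r := Defs.edist w1 origin + Defs.edist w2 origin + Defs.edist w3 origin.
have n1 := edist_ge0 w1 origin; have n2 := edist_ge0 w2 origin; have n3 := edist_ge0 w3 origin.
set C0 := r + 1.
set F := [set p | vert M p /\ `|p.1| <= C0 /\ `|p.2| <= C0].
have [e0 [he0 hsep]] := fin_sep (box_finite C0 hlfv).
exists r, (Num.min e0 (1 / 2)); split; first by rewrite lt_min he0 /=; lra.
move=> h hh hclose.
have [gi hgi [hl hr]] := Ginv hG hg.
have hk : G (gi \o h) by apply: Gcomp.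
have gii := Giso hG hgi.
have hfix : forall w, vert M w -> Defs.edist w origin <= r -> (gi \o h) w = w.
  move=> w hw hwr.
  have hd : Defs.edist ((gi \o h) w) w < Num.min e0 (1 / 2).
    have e : gi (g w) = w by have := congr1 (fun F => F w) hl.
    rewrite /= -{2}e gii; exact: hclose.
  have [c1 c2] := edist_coord w origin; rewrite /origin /= !subr0 in c1 c2.
  have [d1 d2] := edist_coord ((gi \o h) w) w.
  have hm1 : Num.min e0 (1 / 2) <= e0 by rewrite ge_min lexx.
  have hm2 : Num.min e0 (1 / 2) <= 1 / 2 by rewrite ge_min lexx orbT.
  case: (pselect ((gi \o h) w = w)) => // hne; exfalso.
  have hFk : [set p | vert M p /\ `|p.1| <= C0 /\ `|p.2| <= C0] ((gi \o h) w).
    split; first exact: (Gvert hact hk hw).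
    have t1 : `|((gi \o h) w).1| <= `|w.1| + `|((gi \o h) w).1 - w.1|.
      by have := ler_normD w.1 (((gi \o h) w).1 - w.1); rewrite addrC subrK addrC.
    have t2 : `|((gi \o h) w).2| <= `|w.2| + `|((gi \o h) w).2 - w.2|.
      by have := ler_normD w.2 (((gi \o h) w).2 - w.2); rewrite addrC subrK addrC.
    rewrite /C0; split; lra.
  have hFw : [set p | vert M p /\ `|p.1| <= C0 /\ `|p.2| <= C0] w.
    by split => //; rewrite /C0; split; lra.
  have := hsep _ hFk _ hFw hne; lra.
have f1 := hfix w1 hw1 (ltac:(rewrite /r; lra)).
have f2 := hfix w2 hw2 (ltac:(rewrite /r; lra)).
have f3 := hfix w3 hw3 (ltac:(rewrite /r; lra)).
have ki := Giso hG hk.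
have lu : lin (gi \o h) u = u.
  apply: (padd_cancel (a := w1)).
  have e2 : padd w1 u = w2 by [].
  by rewrite -{1}f1 -(iso_shift ki) e2 f2.
have lv : lin (gi \o h) v = v.
  apply: (padd_cancel (a := w1)).
  have e3 : padd w1 v = w3 by [].
  by rewrite -{1}f1 -(iso_shift ki) e3 f3.
have hlin := lin_fix2 (det_of_indep hind) lu lv.
have ko : (gi \o h) origin = origin.
  have := iso_rep ki w1; rewrite f1 hlin => e.
  apply: (padd_cancel (a := w1)); rewrite -e /padd /origin /=.
  by case: (w1) => a b /=; rewrite !addr0.
have kid : forall x, (gi \o h) x = x.
  by move=> x; rewrite (iso_rep ki x) hlin ko /padd /origin /=; case: x => a b /=; rewrite !addr0.
apply: funext => x.
have := congr1 (fun F => F (h x)) hr; rewrite /= => <-.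
by have := kid x; rewrite /= => ->.
Qed.

Theorem lemma3p1 (M : embedded_graph) (G : set (plane -> plane)) :
  is_map M -> locally_finite_graph M -> one_ended M ->
  locally_finite_vertices M ->
  isom_subgroup G -> quasi_transitive G M ->
  wallpaper_group G.
Proof.
move=> [_ [hconn hinf _]] hlfg [_ hone] hlfv hG hqt.
have [u [v [hind hu hv]]] := two_translations hconn hinf hlfg hone hlfv hG hqt.
have [v0 hv0] : exists v0, vert M v0.
  case: (pselect (exists v0, vert M v0)) => // hn; exfalso; apply: hinf.
  suff -> : vert M = set0 by [].
  by apply/seteqP; split => x // hx; apply: hn; exists x.
split => //; last by exists u, v.
exact: (discreteness hlfv hG (proj1 hqt) hv0 hind hu hv).
Qed.
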